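(* Let $r\ge2$ be an integer, let $f\in C_p(\mathbb{R})$ and let $c>0$. Then $f\in\mathcal{P}_c$ if and only if the following holds: for all $n\in\mathbb{N}_0$, $k\in\mathbb{Z}$, $y\in(0,1)$ and all $t\ge \frac{1}{2cr^n}$, $$q_f\Big(t,x;\tfrac{k+y}{r^n}\Big)\ge \min\Big\{q_f\Big(t,x;\tfrac{k}{r^n}\Big),\,q_f\Big(t,x;\tfrac{k+1}{r^n}\Big)\Big\}\quad\text{for all }x\in\mathbb{R}.$$
   Context: $C_p(\mathbb{R})$ denotes the set of all continuous functions $f:\mathbb{R}\to\mathbb{R}$ periodic with period $1$ with $f(0)=0$; $\mathbb{N}_0=\mathbb{N}\cup\{0\}$. For $f\in C_p(\mathbb{R})$, $q_f(t,x;z)=f(z)+\frac{1}{2t}(x-z)^2$ for $(t,x,z)\in(0,\infty)\times\mathbb{R}\times\mathbb{R}$. For $(n,k,y)\in\mathbb{N}_0\times\mathbb{Z}\times(0,1)$ let $\delta^+_{n,k}(y;f)=\dfrac{f(\frac{k+1}{r^n})-f(\frac{k+y}{r^n})}{\frac{1-y}{r^n}}$, $\delta^-_{n,k}(y;f)=\dfrac{f(\frac{k+y}{r^n})-f(\frac{k}{r^n})}{\frac{y}{r^n}}$. For $c>0$, $\mathcal{P}_c$ is the set of $f\in C_p(\mathbb{R})$ with $\delta^+_{n,k}(y;f)-\delta^-_{n,k}(y;f)\le -c$ for all $(n,k,y)\in\mathbb{N}_0\times\mathbb{Z}\times(0,1)$. *)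

(* Defs.v *)
From Stdlib Require Import Reals Lra Lia ZArith.
Open Scope R_scope.

Definition Cp (f : R -> R) : Prop :=
  continuity f /\ (forall x, f (x + 1) = f x) /\ f 0 = 0.

Definition q (f : R -> R) (t x z : R) : R := f z + (x - z) ^ 2 / (2 * t).

Definition pt (r : nat) (n : nat) (k : Z) (y : R) : R := (IZR k + y) / (INR r) ^ n.

Definition delta_plus (r : nat) (f : R -> R) (n : nat) (k : Z) (y : R) : R :=
  (f (pt r n k 1) - f (pt r n k y)) / ((1 - y) / (INR r) ^ n).

Definition delta_minus (r : nat) (f : R -> R) (n : nat) (k : Z) (y : R) : R :=
  (f (pt r n k y) - f (pt r n k 0)) / (y / (INR r) ^ n).

Definition Pc (r : nat) (c : R) (f : R -> R) : Prop :=
  Cp f /\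
  forall (n : nat) (k : Z) (y : R), 0 < y < 1 ->
    delta_plus r f n k y - delta_minus r f n k y <= - c.

(* Main.v *)
Require Import Defs.
From Stdlib Require Import Reals ZArith Lra Lia.
Open Scope R_scope.

Lemma key_id (f : R -> R) (r n : nat) (k : Z) (y t x : R) :
  0 < INR r ^ n -> 0 < t -> 0 < y < 1 ->
  (1 - y) * q f t x (pt r n k 0) + y * q f t x (pt r n k 1) - q f t x (pt r n k y)
  = y * (1 - y) / INR r ^ n *
    (delta_plus r f n k y - delta_minus r f n k y + 1 / (2 * t * INR r ^ n)).
Proof.
  intros HP Ht Hy.
  unfold q, delta_plus, delta_minus, pt.
  generalize (f ((IZR k + 0) / INR r ^ n)) (f ((IZR k + 1) / INR r ^ n))
    (f ((IZR k + y) / INR r ^ n)).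
  intros fa fb fz.
  field; repeat split; lra.
Qed.

Theorem theorem2p3 (r : nat) (f : R -> R) (c : R) :
  (2 <= r)%nat -> Cp f -> 0 < c ->
  (Pc r c f <->
   forall (n : nat) (k : Z) (y t : R),
     0 < y < 1 -> 1 / (2 * c * (INR r) ^ n) <= t ->
     forall x : R,
       q f t x (pt r n k y) >= Rmin (q f t x (pt r n k 0)) (q f t x (pt r n k 1))).
Proof.
  intros Hr Hf Hc.
  assert (HP : forall n, 0 < INR r ^ n).
  { intro n. apply pow_lt. apply lt_0_INR. lia. }
  split.
  - intros [_ HPc] n k y t Hy Ht x.
    specialize (HP n). set (P := INR r ^ n) in *.
    assert (Hpos : 0 < 1 / (2 * c * P)).
    { apply Rdiv_lt_0_compat; [lra|]. apply Rmult_lt_0_compat; lra. }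
    assert (Ht0 : 0 < t) by lra.
    pose proof (key_id f r n k y t x HP Ht0 Hy) as E. fold P in E.
    assert (H1 : 1 <= 2 * c * P * t).
    { apply Rmult_le_compat_l with (r := 2 * c * P) in Ht.
      2: { apply Rlt_le, Rmult_lt_0_compat; lra. }
      replace (2 * c * P * (1 / (2 * c * P))) with 1 in Ht by (field; lra). lra. }
    assert (H2 : 1 / (2 * t * P) <= c).
    { apply Rmult_le_reg_r with (r := 2 * t * P).
      { apply Rmult_lt_0_compat; lra. }
      replace (1 / (2 * t * P) * (2 * t * P)) with 1 by (field; lra). lra. }
    specialize (HPc n k y Hy).
    assert (Hneg : y * (1 - y) / P *
      (delta_plus r f n k y - delta_minus r f n k y + 1 / (2 * t * P)) <= 0).
    { assert (0 < y * (1 - y) / P).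
      { apply Rdiv_lt_0_compat; [apply Rmult_lt_0_compat|]; lra. }
      assert (delta_plus r f n k y - delta_minus r f n k y + 1 / (2 * t * P) <= 0) by lra.
      nra. }
    apply Rle_ge.
    set (qa := q f t x (pt r n k 0)) in *.
    set (qb := q f t x (pt r n k 1)) in *.
    set (qz := q f t x (pt r n k y)) in *.
    assert (qz >= (1 - y) * qa + y * qb) by lra.
    unfold Rmin; destruct (Rle_dec qa qb); nra.
  - intros H. split; [exact Hf|].
    intros n k y Hy.
    specialize (HP n). set (P := INR r ^ n) in *.
    set (t := 1 / (2 * c * P)).
    assert (Ht0 : 0 < t).
    { apply Rdiv_lt_0_compat; [lra|]. apply Rmult_lt_0_compat; lra. }
    set (fa := f (pt r n k 0)). set (fb := f (pt r n k 1)).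
    set (x := (pt r n k 0 + pt r n k 1) / 2 + (fb - fa) / (2 * c)).
    pose proof (key_id f r n k y t x HP Ht0 Hy) as E. fold P in E.
    assert (Eab : q f t x (pt r n k 0) = q f t x (pt r n k 1)).
    { unfold q, x, t; fold fa fb. unfold pt. fold P.
      field. repeat split; lra. }
    specialize (H n k y t Hy (Rle_refl _) x).
    rewrite <- Eab in H. rewrite Rmin_left in H by lra.
    assert (Ec : 1 / (2 * t * P) = c) by (unfold t; field; lra).
    rewrite Ec in E.
    assert (Hm : 0 < y * (1 - y) / P).
    { apply Rdiv_lt_0_compat; [apply Rmult_lt_0_compat|]; lra. }
    assert (y * (1 - y) / P * (delta_plus r f n k y - delta_minus r f n k y + c) <= 0)
      by (rewrite <- E; rewrite <- Eab; lra).
    assert (delta_plus r f n k y - delta_minus r f n k y + c <= 0).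
    { destruct (Rle_dec (delta_plus r f n k y - delta_minus r f n k y + c) 0); auto.
      exfalso. assert (0 < y * (1 - y) / P * (delta_plus r f n k y - delta_minus r f n k y + c)).
      { apply Rmult_lt_0_compat; lra. } lra. }
    lra.
Qed.
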